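(* Let $\mathcal G$ be a finite connected groupoid and $\alpha=(S_g,\alpha_g)_{g\in\mathcal G}$ a unital group-type partial action of $\mathcal G$ on a ring $S=\bigoplus_{y\in\mathcal G_0}S_y$, with $S_g=S1_g$ and $1_g\neq0$ for all $g\in\mathcal G$. Let $\mathcal H\in\mathrm{wSub}_\alpha(\mathcal G)$, with connected components $\mathcal H_1,\dots,\mathcal H_r$ having object sets $Y_1,\dots,Y_r$ (so $\mathcal G_0=Y_1\,\dot\cup\cdots\dot\cup\,Y_r$). For each $j$ choose $y_j\in Y_j$ and a transversal $\tau_j=\{\tau_{j,z}\}_{z\in Y_j}$ in $\mathcal H_j$ for $y_j$ satisfying $S_{\tau_{j,z}^{-1}}=S_{y_j}$ and $S_{\tau_{j,z}}=S_z$ for all $z\in Y_j$. Let $T=S^{\alpha_{\mathcal H}}$ and $T_{y_j}=S_{y_j}^{\alpha_{\mathcal H_j(y_j)}}$. Then for $g\in\mathcal G$: $g\in\mathcal G_T$ if and only if there exists $1\le k\le r$ such that $s(g),t(g)\in Y_k$ and $\tau_k(g):=\tau_{k,t(g)}^{-1}g\,\tau_{k,s(g)}\in\mathcal G(y_k)_{T_{y_k}}$.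
   Context: A groupoid is a small category with all morphisms invertible; $\mathcal G_0$ is its object set (identified with identity morphisms), $s(g),t(g)$ source and target, $\mathcal G(x,y)=\{g:s(g)=x,t(g)=y\}$, $\mathcal G(x)=\mathcal G(x,x)$; $gh$ defined iff $s(g)=t(h)$; connected means all $\mathcal G(x,y)\ne\emptyset$; connected components are full subgroupoids on classes of $x\sim y\iff\mathcal G(x,y)\neq\emptyset$. A partial action $\alpha=(S_g,\alpha_g)_{g\in\mathcal G}$ on a ring $S$: for each $g$, $S_{t(g)}$ is an ideal of $S$, $S_g$ an ideal of $S_{t(g)}$, $\alpha_g:S_{g^{-1}}\to S_g$ a ring isomorphism; $\alpha_x=\mathrm{id}_{S_x}$; for composable $(g,h)$, $\alpha_h^{-1}(S_{g^{-1}}\cap S_h)\subseteq S_{(gh)^{-1}}$ and $\alpha_g\alpha_h(a)=\alpha_{gh}(a)$ there. Unital: $S_g=S1_g$, $1_g$ central idempotent. A transversal for $x$ in a connected groupoid $\mathcal K$ is $\{\tau_y\}_{y\in\mathcal K_0}$ with $\tau_y\in\mathcal K(x,y)$, $\tau_x=x$; a partial action of connected $\mathcal K$ on $A=\bigoplus_{y\in\mathcal K_0}A_y$ is group-type if some $x$ and transversal satisfy $A_{\tau_y^{-1}}=A_x$, $A_{\tau_y}=A_y$ for all $y$; for non-connected $\mathcal K$ it is group-type if each restriction to a connected component $\mathcal K_Y$ (acting on $\bigoplus_{y\in Y}A_y$) is group-type. For a subgroupoid $\mathcal H$, $\alpha_{\mathcal H}=(S_h,\alpha_h)_{h\in\mathcal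 H}$ acts on $\bigoplus_{z\in\mathcal H_0}S_z$. $\mathrm{wSub}_\alpha(\mathcal G)$ is the set of subgroupoids $\mathcal H$ with $\mathcal H_0=\mathcal G_0$ (wide) and $\alpha_{\mathcal H}$ group-type. For a subgroupoid $\mathcal K$ and subring $A\subseteq S$, $A^{\alpha_{\mathcal K}}=\{a\in A:\alpha_k(a1_{k^{-1}})=a1_k\ \forall k\in\mathcal K\}$. For a subring $T\subseteq S$, $\mathcal G_T=\{g\in\mathcal G:\alpha_g(t1_{g^{-1}})=t1_g\ \forall t\in T\}$; for $y\in\mathcal G_0$ and a subring $B\subseteq S_y$, $\mathcal G(y)_B=\{l\in\mathcal G(y):\alpha_l(b1_{l^{-1}})=b1_l\ \forall b\in B\}$. *)

(* Defs.v *)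
From HB Require Import structures.
From mathcomp Require Import all_boot all_algebra.
Set Implicit Arguments. Unset Strict Implicit. Unset Printing Implicit Defensive.
Import GRing.Theory.
Local Open Scope ring_scope.

(* A finite groupoid: finite set of objects, finite set of morphisms,
   source/target, identities (objects are identified with identity
   morphisms via [gid]), inverses and a composition [gmul g h] = gh,
   meaningful when gsrc g = gtgt h. *)
Record groupoid := Groupoid {
  gobj : finType;
  gmor : finType;
  gsrc : gmor -> gobj;
  gtgt : gmor -> gobj;
  gid : gobj -> gmor;
  ginv : gmor -> gmor;
  gmul : gmor -> gmor -> gmor;
  gsrc_id : forall x, gsrc (gid x) = x;
  gtgt_id : forall x, gtgt (gid x) = x;
  gsrc_mul : forall g h, gsrc g = gtgt h -> gsrc (gmul g h) = gsrc h;
  gtgt_mul : forall g h, gsrc g = gtgt h -> gtgt (gmul g h) = gtgt g;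
  gmulA : forall g h k, gsrc g = gtgt h -> gsrc h = gtgt k ->
            gmul (gmul g h) k = gmul g (gmul h k);
  gmul_idl : forall g, gmul (gid (gtgt g)) g = g;
  gmul_idr : forall g, gmul g (gid (gsrc g)) = g;
  gsrc_inv : forall g, gsrc (ginv g) = gtgt g;
  gtgt_inv : forall g, gtgt (ginv g) = gsrc g;
  gmulVg : forall g, gmul (ginv g) g = gid (gsrc g);
  gmulgV : forall g, gmul g (ginv g) = gid (gtgt g)
}.

Definition gconnected (G : groupoid) : Prop :=
  forall x y : gobj G, exists g : gmor G, gsrc g = x /\ gtgt g = y.

Definition subgroupoid (G : groupoid) (H : {set gmor G}) : Prop :=
  [/\ forall g h, g \in H -> h \in H -> gsrc g = gtgt h -> gmul g h \in H,
      forall g, g \in H -> ginv g \in H &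
      forall g, g \in H -> gid (gsrc g) \in H].

Definition wide_subgroupoid (G : groupoid) (H : {set gmor G}) : Prop :=
  subgroupoid H /\ forall x, gid x \in H.

Definition hconn (G : groupoid) (H : {set gmor G}) (x y : gobj G) : Prop :=
  exists2 h, h \in H & gsrc h = x /\ gtgt h = y.

Section PartialAction.
Variables (G : groupoid) (S : pzRingType).
(* unital partial action data: e g = 1_g, S_g = S 1_g, alpha g = alpha_g
   (only its values on S_{g^-1} matter) *)
Variables (e : gmor G -> S) (alpha : gmor G -> S -> S).

Definition inS (g : gmor G) (a : S) : Prop := exists s, a = s * e g.

Definition sameS (g h : gmor G) : Prop := forall a, inS g a <-> inS h a.

Definition central_idem (c : S) : Prop := c * c = c /\ forall s, c * s = s * c.

Definition dsum_objects : Prop :=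
  (forall s : S, exists f : gobj G -> S,
      (forall y, inS (gid y) (f y)) /\ s = \sum_(y : gobj G) f y) /\
  (forall f f' : gobj G -> S,
      (forall y, inS (gid y) (f y)) -> (forall y, inS (gid y) (f' y)) ->
      \sum_(y : gobj G) f y = \sum_(y : gobj G) f' y -> forall y, f y = f' y).

Definition ring_iso_on (g : gmor G) : Prop :=
  (forall a, inS (ginv g) a -> inS g (alpha g a)) /\
  (forall a b, inS (ginv g) a -> inS (ginv g) b ->
     alpha g (a + b) = alpha g a + alpha g b) /\
  (forall a b, inS (ginv g) a -> inS (ginv g) b ->
     alpha g (a * b) = alpha g a * alpha g b) /\
  (forall a b, inS (ginv g) a -> inS (ginv g) b -> alpha g a = alpha g b -> a = b) /\
  (forall c, inS g c -> exists2 a, inS (ginv g) a & alpha g a = c).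

Definition unital_partial_action : Prop :=
  (forall g, central_idem (e g)) /\
  (* S_g is an ideal of S_{t(g)} (S_{t(g)} is an ideal of S as 1_{t(g)} is central) *)
  (forall g a, inS g a -> inS (gid (gtgt g)) a) /\
  (forall g, ring_iso_on g) /\
  (forall x a, inS (gid x) a -> alpha (gid x) a = a) /\
  (forall g h, gsrc g = gtgt h -> forall a, inS (ginv h) a ->
     inS (ginv g) (alpha h a) -> inS h (alpha h a) ->
     inS (ginv (gmul g h)) a /\ alpha g (alpha h a) = alpha (gmul g h) a).

(* group-type restriction to the subgroupoid H (component-wise); for
   H = all of a connected G this is the connected definition *)
Definition group_type_on (H : {set gmor G}) : Prop :=
  forall z : gobj G, exists x, hconn H z x /\
    exists tau : gobj G -> gmor G, tau x = gid x /\
      forall y, hconn H z y ->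
        [/\ tau y \in H, gsrc (tau y) = x, gtgt (tau y) = y,
            sameS (ginv (tau y)) (gid x) & sameS (tau y) (gid y)].

Definition wSub (H : {set gmor G}) : Prop :=
  wide_subgroupoid H /\ group_type_on H.

Definition fixring (A : S -> Prop) (K : gmor G -> Prop) (a : S) : Prop :=
  A a /\ forall k, K k -> alpha k (a * e (ginv k)) = a * e k.

Definition stabG (T : S -> Prop) (g : gmor G) : Prop :=
  forall t, T t -> alpha g (t * e (ginv g)) = t * e g.

Definition stabGy (y : gobj G) (B : S -> Prop) (l : gmor G) : Prop :=
  [/\ gsrc l = y, gtgt l = y & stabG B l].

End PartialAction.

(* Main.v *)
Require Import Defs.
From HB Require Import structures.
From mathcomp Require Import all_boot all_algebra.
Set Implicit Arguments. Unset Strict Implicit. Unset Printing Implicit Defensive.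
Import GRing.Theory.
Local Open Scope ring_scope.

Section Gpd.
Variable G : groupoid.
Implicit Types g h k : gmor G.

Lemma ginvK g : ginv (ginv g) = g.
Proof.
have e1 : gsrc (ginv (ginv g)) = gsrc g by rewrite gsrc_inv gtgt_inv.
rewrite -[LHS]gmul_idr e1 -gmulVg -gmulA ?gmulVg ?gsrc_inv ?gtgt_inv //.
by rewrite gmul_idl.
Qed.

Lemma ginv_uniq x k : gsrc x = gtgt k -> gmul x k = gid (gsrc k) -> x = ginv k.
Proof.
move=> sx xk.
rewrite -[x]gmul_idr sx -gmulgV -gmulA ?gtgt_inv // xk.
by rewrite -gtgt_inv gmul_idl.
Qed.

Lemma ginv_mul g h : gsrc g = gtgt h -> ginv (gmul g h) = gmul (ginv h) (ginv g).
Proof.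
move=> gh; symmetry; apply: ginv_uniq.
  by rewrite gsrc_mul ?gsrc_inv ?gtgt_inv // gtgt_mul.
rewrite gmulA ?gsrc_inv ?gtgt_inv ?gtgt_mul ?gsrc_mul //.
rewrite -(@gmulA _ (ginv g)) ?gsrc_inv ?gtgt_inv // gmulVg gh gmul_idl gmulVg.
by [].
Qed.

End Gpd.

Section PA.
Variables (G : groupoid) (S : pzRingType) (e : gmor G -> S) (alpha : gmor G -> S -> S).
Hypothesis ci : forall g, central_idem (e g).
Hypothesis ideal_t : forall g a, inS e g a -> inS e (gid (gtgt g)) a.
Hypothesis iso : forall g, ring_iso_on e alpha g.
Hypothesis aid : forall x a, inS e (gid x) a -> alpha (gid x) a = a.
Hypothesis comp : forall g h, gsrc g = gtgt h -> forall a, inS e (ginv h) a ->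
     inS e (ginv g) (alpha h a) -> inS e h (alpha h a) ->
     inS e (ginv (gmul g h)) a /\ alpha g (alpha h a) = alpha (gmul g h) a.
Implicit Types g h k u v : gmor G.

Lemma inS_e g : inS e g (e g).
Proof. by exists 1; rewrite mul1r. Qed.

Lemma inS_mull g a b : inS e g a -> inS e g (b * a).
Proof. by case=> s ->; exists (b * s); rewrite mulrA. Qed.

Lemma inS_mulr g a b : inS e g a -> inS e g (a * b).
Proof.
case=> s ->; exists (s * b).
by rewrite -mulrA (proj2 (ci g)) mulrA.
Qed.

Lemma inS_idr g a : inS e g a -> a * e g = a.
Proof. by case=> s ->; rewrite -mulrA (proj1 (ci g)). Qed.

Lemma inS_idl g a : inS e g a -> e g * a = a.
Proof. by move=> H; rewrite (proj2 (ci g)) inS_idr. Qed.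

Lemma inS0 g : inS e g 0.
Proof. by exists 0; rewrite mul0r. Qed.

Lemma same_e g h : sameS e g h -> e g = e h.
Proof.
move=> sgh.
have h1 : inS e h (e g) by apply/sgh; apply: inS_e.
have h2 : inS e g (e h) by apply/sgh; apply: inS_e.
by rewrite -(inS_idr h1) (proj2 (ci g)) inS_idr.
Qed.

Lemma inS_eq g h a : e g = e h -> inS e g a -> inS e h a.
Proof. by rewrite /inS => ->. Qed.

Lemma alpha_in g a : inS e (ginv g) a -> inS e g (alpha g a).
Proof. by case: (iso g) => H _; apply: H. Qed.

Lemma alpha_mul g a b : inS e (ginv g) a -> inS e (ginv g) b ->
  alpha g (a * b) = alpha g a * alpha g b.
Proof. by case: (iso g) => _ [_ [H _]]; apply: H. Qed.

Lemma alpha_add g a b : inS e (ginv g) a -> inS e (ginv g) b ->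
  alpha g (a + b) = alpha g a + alpha g b.
Proof. by case: (iso g) => _ [H _]; apply: H. Qed.

Lemma alpha_inj g a b : inS e (ginv g) a -> inS e (ginv g) b ->
  alpha g a = alpha g b -> a = b.
Proof. by case: (iso g) => _ [_ [_ [H _]]]; apply: H. Qed.

Lemma alpha_surj g c : inS e g c -> exists2 a, inS e (ginv g) a & alpha g a = c.
Proof. by case: (iso g) => _ [_ [_ [_ H]]]; apply: H. Qed.

Lemma alpha0 g : alpha g 0 = 0.
Proof.
have := alpha_add (inS0 (ginv g)) (inS0 (ginv g)).
rewrite addr0 => h.
by apply: (addrI (alpha g 0)); rewrite -h addr0.
Qed.

Lemma alpha_e g : alpha g (e (ginv g)) = e g.
Proof.
set u := alpha g (e (ginv g)).
have uin : inS e g u by apply: alpha_in; apply: inS_e.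
have [c cin cE] := alpha_surj (inS_e g).
have : u * e g = e g.
  by rewrite -cE /u -alpha_mul ?inS_idl //; apply: inS_e.
by rewrite inS_idr.
Qed.

Lemma alpha_inv k x : inS e (ginv k) x -> alpha (ginv k) (alpha k x) = x.
Proof.
move=> xin.
have [_ ->] := comp (g:=ginv k) (h:=k) (gsrc_inv k) xin
  (ltac:(rewrite ginvK; exact: alpha_in xin)) (alpha_in xin).
rewrite gmulVg aid //.
by rewrite -(gtgt_inv k); apply: ideal_t.
Qed.

Section EC.
Variables (y : gobj G) (u v g : gmor G).
Hypotheses (su : gsrc u = y) (tu : gtgt u = gsrc g) (sv : gsrc v = y)
  (tv : gtgt v = gtgt g) (eu : e u = e (gid (gsrc g))) (eui : e (ginv u) = e (gid y))
  (ev : e v = e (gid (gtgt g))) (evi : e (ginv v) = e (gid y)).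

Let k := gmul g u.
Let l := gmul (gmul (ginv v) g) u.

Lemma sk : gsrc k = y. Proof. by rewrite /k gsrc_mul. Qed.
Lemma tk : gtgt k = gtgt g. Proof. by rewrite /k gtgt_mul. Qed.
Lemma hl : l = gmul (ginv v) k.
Proof. by rewrite /l /k gmulA // gsrc_inv. Qed.
Lemma hvl : gmul v l = k.
Proof.
rewrite hl -gmulA ?gtgt_inv ?gsrc_inv ?tk // gmulgV tv -tk.
exact: gmul_idl.
Qed.
Lemma sl : gsrc l = y.
Proof. by rewrite hl gsrc_mul ?sk // gsrc_inv tk. Qed.
Lemma tl : gtgt l = y.
Proof. by rewrite hl gtgt_mul ?gtgt_inv // gsrc_inv tk. Qed.

Lemma inS_y_l a : inS e l a -> inS e (gid y) a.
Proof. by rewrite -tl; apply: ideal_t. Qed.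
Lemma inS_y_li a : inS e (ginv l) a -> inS e (gid y) a.
Proof. by rewrite -sl -gtgt_inv; apply: ideal_t. Qed.

Lemma lemE : alpha u (e (ginv l)) = e (ginv g).
Proof.
set x := e (ginv l).
have xin : inS e (ginv l) x by apply: inS_e.
have xy : inS e (gid y) x by apply: inS_y_li.
have b1 : gsrc v = gtgt l by rewrite tl.
have [xk _] := comp b1 xin (inS_eq (esym evi) (inS_y_l (alpha_in xin))) (alpha_in xin).
rewrite hvl in xk.
set w := alpha k x.
have win : inS e k w by apply: alpha_in.
have ukE : gmul u (ginv k) = ginv g.
  rewrite /k (ginv_mul (esym tu)) -gmulA ?gtgt_inv ?gsrc_inv // gmulgV tu -gtgt_inv.
  exact: gmul_idl.
have c1 : gsrc u = gtgt (ginv k) by rewrite gtgt_inv sk.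
have c2 : inS e (ginv (ginv k)) w by rewrite ginvK.
have c3 : inS e (ginv u) (alpha (ginv k) w).
  by rewrite alpha_inv //; apply: (inS_eq (esym eui)).
have c4 : inS e (ginv k) (alpha (ginv k) w) by rewrite alpha_inv.
have [win2 pE] := comp c1 c2 c3 c4.
rewrite alpha_inv // ukE in pE.
rewrite ukE in win2.
have pin : inS e (ginv g) (alpha u x) by rewrite pE; apply: alpha_in.
have egu : inS e u (e (ginv g)).
  by apply: (inS_eq (esym eu)); rewrite -gtgt_inv; apply: ideal_t; apply: inS_e.
have [c cin cE] := alpha_surj egu.
have d1 : inS e (ginv g) (alpha u c) by rewrite cE; apply: inS_e.
have d2 : inS e u (alpha u c) by rewrite cE.
have [ck _] := comp (esym tu) cin d1 d2.
have d3 : gsrc (ginv v) = gtgt k by rewrite gsrc_inv tk.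
have d4 : inS e (ginv (ginv v)) (alpha k c).
  rewrite ginvK; apply: (inS_eq (esym ev)); rewrite -tk; apply: ideal_t.
  exact: alpha_in.
have [cl _] := comp d3 ck d4 (alpha_in ck).
rewrite -hl in cl.
have : e (ginv g) = e (ginv g) * alpha u x.
  rewrite -{1}cE -(inS_idr cl) alpha_mul ?cE //.
    by apply: (inS_eq (esym eui)); apply: inS_y_li.
by move=> h; rewrite -{1}(inS_idr pin) -(proj2 (ci _)) -h.
Qed.

End EC.

Section EC2.
Variables (y : gobj G) (u v g : gmor G).
Hypotheses (su : gsrc u = y) (tu : gtgt u = gsrc g) (sv : gsrc v = y)
  (tv : gtgt v = gtgt g) (eu : e u = e (gid (gsrc g))) (eui : e (ginv u) = e (gid y))
  (ev : e v = e (gid (gtgt g))) (evi : e (ginv v) = e (gid y)).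

Lemma lemC a : inS e (gid y) a ->
  (alpha g (alpha u a * e (ginv g)) = alpha v a * e g <->
   alpha (gmul (gmul (ginv v) g) u) (a * e (ginv (gmul (gmul (ginv v) g) u)))
     = a * e (gmul (gmul (ginv v) g) u)).
Proof.
move=> ay.
set l := gmul (gmul (ginv v) g) u.
have ayu : inS e (ginv u) a by apply: (inS_eq (esym eui)).
have ayv : inS e (ginv v) a by apply: (inS_eq (esym evi)).
have lyi : inS e (ginv u) (e (ginv l)).
  by apply: (inS_eq (esym eui)); apply: (inS_y_li su tu tv); apply: inS_e.
have E1 : alpha u a * e (ginv g) = alpha u (a * e (ginv l)).
  by rewrite alpha_mul // /l (lemE su tu sv tv eu eui ev evi).
have aly : inS e (ginv l) (a * e (ginv l)) by apply: inS_mull; apply: inS_e.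
have [_ E2] := comp (esym tu) (inS_mull a lyi)
  (ltac:(rewrite -E1; apply: inS_mull; apply: inS_e)) (alpha_in (inS_mull a lyi)).
have b1 : gsrc v = gtgt l by rewrite (tl tu sv tv).
have vin : inS e (ginv v) (alpha l (a * e (ginv l))).
  by apply: (inS_eq (esym evi)); apply: (inS_y_l tu sv tv); apply: alpha_in.
have [_ E3] := comp b1 aly vin (alpha_in aly).
rewrite /l (hvl tu tv) -/l in E3.
have lE : ginv (gmul (gmul (ginv u) (ginv g)) v) = l.
  rewrite ginv_mul; last by rewrite gsrc_mul ?gsrc_inv // gtgt_inv.
  rewrite ginv_mul; last by rewrite gsrc_inv gtgt_inv.
  by rewrite !ginvK /l gmulA // gsrc_inv.
have E4 : alpha v (e l) = e g.
  have := @lemE y v u (ginv g) sv; rewrite gsrc_inv gtgt_inv ginvK lE.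
  by apply.
have lyv : inS e (ginv v) (e l).
  by apply: (inS_eq (esym evi)); apply: (inS_y_l tu sv tv); apply: inS_e.
have E5 : alpha v a * e g = alpha v (a * e l) by rewrite alpha_mul // E4.
rewrite E1 E2 -E3 E5; split; last by move=> ->.
apply: alpha_inj => //.
by apply: inS_mulr.
Qed.
End EC2.
End PA.

Section Main.
Variables (G : groupoid) (S : pzRingType) (e : gmor G -> S) (alpha : gmor G -> S -> S).
Hypothesis ci : forall g, central_idem (e g).
Hypothesis ideal_t : forall g a, inS e g a -> inS e (gid (gtgt g)) a.
Hypothesis iso : forall g, ring_iso_on e alpha g.
Hypothesis aid : forall x a, inS e (gid x) a -> alpha (gid x) a = a.
Hypothesis comp : forall g h, gsrc g = gtgt h -> forall a, inS e (ginv h) a ->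
     inS e (ginv g) (alpha h a) -> inS e h (alpha h a) ->
     inS e (ginv (gmul g h)) a /\ alpha g (alpha h a) = alpha (gmul g h) a.
Hypothesis DS : dsum_objects e.
Variables (H : {set gmor G}) (rep : gobj G -> gobj G) (tau : gobj G -> gmor G).
Hypothesis Hsub : subgroupoid H.
Hypothesis Hwide : forall x, gid x \in H.
Hypothesis Hrep1 : forall z, hconn H z (rep z).
Hypothesis Hrep2 : forall z z', hconn H z z' -> rep z = rep z'.
Hypothesis Htau1 : forall z, tau (rep z) = gid (rep z).
Hypothesis Htau2 : forall z, [/\ tau z \in H, gsrc (tau z) = rep z & gtgt (tau z) = z].
Hypothesis Htau3 : forall z, sameS e (ginv (tau z)) (gid (rep z)) /\ sameS e (tau z) (gid z).

Implicit Types g k : gmor G.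

Definition TT t := fixring e alpha (fun _ => True) (fun k => k \in H) t.
Definition TY y := fixring e alpha (inS e (gid y))
                       (fun k => [/\ k \in H, gsrc k = y & gtgt k = y]).

Lemma hconn_sym x y : hconn H x y -> hconn H y x.
Proof.
case=> h hH [sh th]; exists (ginv h); first by case: Hsub => _ /(_ h hH).
by rewrite gsrc_inv gtgt_inv.
Qed.

Lemma hconn_trans x y z : hconn H x y -> hconn H y z -> hconn H x z.
Proof.
case=> h hH [sh th] [k kH [sk tk]]; exists (gmul k h).
  by case: Hsub => /(_ k h kH hH) + _ _; apply; rewrite sk.
by rewrite gsrc_mul ?gtgt_mul ?sk.
Qed.

Lemma rep_eq u w : hconn H u w <-> rep u = rep w.
Proof.
split; first exact: Hrep2.
move=> E; apply: (hconn_trans (Hrep1 u)); rewrite E; apply: hconn_sym; exact: Hrep1.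
Qed.

Lemma rep_rep z : rep (rep z) = rep z.
Proof. by rewrite -(Hrep2 (Hrep1 z)). Qed.

Lemma etau z : e (tau z) = e (gid z).
Proof. exact: (same_e ci (proj2 (Htau3 z))). Qed.
Lemma etaui z : e (ginv (tau z)) = e (gid (rep z)).
Proof. exact: (same_e ci (proj1 (Htau3 z))). Qed.

Lemma ortho x y : x != y -> e (gid x) * e (gid y) = 0.
Proof.
move=> nxy; set c := e (gid x) * e (gid y).
have cx : inS e (gid x) c by apply: (inS_mulr ci); apply: inS_e.
have cy : inS e (gid y) c by apply: inS_mull; apply: inS_e.
case: DS => _ /(_ (fun z => if z == x then c else 0) (fun z => if z == y then c else 0)).
move=> /(_ _ _ _ x).
rewrite eqxx (negbTE nxy); apply.
- by move=> z; case: eqP => [->|_] //; apply: inS0.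
- by move=> z; case: eqP => [->|_] //; apply: inS0.
by rewrite -!big_mkcond /= !big_pred1_eq.
Qed.

Lemma mul_src t g : t * e (ginv g) = t * e (gid (gsrc g)) * e (ginv g).
Proof.
rewrite -mulrA (inS_idl ci) //.
by rewrite -gtgt_inv; apply: ideal_t; apply: inS_e.
Qed.

Lemma mul_tgt t g : t * e g = t * e (gid (gtgt g)) * e g.
Proof.
rewrite -mulrA (inS_idl ci) //.
by apply: ideal_t; apply: inS_e.
Qed.

Lemma L1 t z : TT t -> t * e (gid z) = alpha (tau z) (t * e (gid (rep z))).
Proof.
case=> _ /(_ (tau z)); case: (Htau2 z) => tH _ _ /(_ tH).
by rewrite etau etaui => ->.
Qed.

Lemma L2 t y : TT t -> TY y (t * e (gid y)).
Proof.
case=> _ Ht; split; first by apply: inS_mull; apply: inS_e.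
move=> k [kH sk tk].
rewrite -!mulrA (inS_idl ci (a := e (ginv k))); last first.
  by rewrite -sk -gtgt_inv; apply: ideal_t; apply: inS_e.
rewrite (inS_idl ci (a := e k)); last by rewrite -tk; apply: ideal_t; apply: inS_e.
exact: Ht.
Qed.

Lemma L3 y a : rep y = y -> TY y a -> exists t, TT t /\
  forall w, t * e (gid w) = if rep w == y then alpha (tau w) a else 0.
Proof.
move=> ry [ay Ha].
set t := \sum_(z | rep z == y) alpha (tau z) a.
have tw : forall w, t * e (gid w) = if rep w == y then alpha (tau w) a else 0.
  move=> w; rewrite /t big_distrl /=.
  rewrite (eq_bigr (fun z => if z == w then alpha (tau z) a else 0)); last first.
    move=> z /eqP rz.
    have zin : inS e (gid z) (alpha (tau z) a).
      apply: (inS_eq (etau z)); apply: (alpha_in iso).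
      by apply: (inS_eq (esym (etaui z))); rewrite rz.
    case: (eqVneq z w) => [<-|nzw]; first by rewrite (inS_idr ci zin).
    by rewrite -(inS_idr ci zin) -mulrA ortho // mulr0.
  rewrite -big_mkcondr /=.
  case: ifP => hw.
    rewrite (eq_bigl (fun z => z == w)) ?big_pred1_eq //.
    by move=> z; case: (eqVneq z w) => [->|]; rewrite ?hw ?andbF.
  rewrite big_pred0 // => z; case: (eqVneq z w) => [->|]; rewrite ?hw ?andbF //.
exists t; split => //; split => // k kH.
rewrite mul_src (mul_tgt t k) !tw.
have rk : rep (gsrc k) = rep (gtgt k).
  by apply: Hrep2; exists k.
rewrite -rk; case: ifP => hy; last by rewrite !mul0r (alpha0 iso).
move/eqP: hy => hy.
case: (Htau2 (gsrc k)) => tuH su tu.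
case: (Htau2 (gtgt k)) => tvH sv tv.
have su' : gsrc (tau (gsrc k)) = y by rewrite su.
have sv' : gsrc (tau (gtgt k)) = y by rewrite sv -rk.
have eui : e (ginv (tau (gsrc k))) = e (gid y) by rewrite etaui hy.
have evi : e (ginv (tau (gtgt k))) = e (gid y) by rewrite etaui -rk hy.
apply/(lemC ci ideal_t iso aid comp su' tu sv' tv (etau _) eui (etau _) evi ay).
apply: Ha; split.
- case: Hsub => Hm Hi _.
  apply: (Hm) => //; last by rewrite gsrc_mul ?gsrc_inv ?tv.
  apply: (Hm) => //; first exact: (Hi).
  by rewrite gsrc_inv tv.
- exact: (sl su' tu tv).
- exact: (tl tu sv' tv).
Qed.


Hypothesis ne0 : forall g, e g != 0.

Lemma TY1 y : TY y (e (gid y)).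
Proof.
split; first exact: inS_e.
move=> k [_ sk tk].
rewrite (inS_idl ci (a := e (ginv k))); last first.
  by rewrite -sk -gtgt_inv; apply: ideal_t; apply: inS_e.
rewrite (inS_idl ci (a := e k)); last by rewrite -tk; apply: ideal_t; apply: inS_e.
exact: (alpha_e ci iso).
Qed.

Lemma mainB g : stabG e alpha TT g <->
  (hconn H (gsrc g) (gtgt g) /\
   stabGy e alpha (rep (gsrc g)) (TY (rep (gsrc g)))
     (gmul (gmul (ginv (tau (gtgt g))) g) (tau (gsrc g)))).
Proof.
set y := rep (gsrc g).
have ry : rep y = y by rewrite /y rep_rep.
case: (Htau2 (gsrc g)) => tuH su tu.
case: (Htau2 (gtgt g)) => tvH sv tv.
have eui : e (ginv (tau (gsrc g))) = e (gid y) by rewrite etaui.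
split.
  move=> st.
  have rt : rep (gtgt g) = y.
    have [t0 [Tt tw]] := L3 ry (TY1 y).
    have := st t0 Tt.
    rewrite mul_src (mul_tgt t0 g) !tw eqxx.
    case: ifP => [/eqP //|_].
    rewrite -eui (alpha_e ci iso) etau (inS_idl ci); last first.
      by rewrite -gtgt_inv; apply: ideal_t; apply: inS_e.
    rewrite (alpha_e ci iso) mul0r => eg0.
    by have := ne0 g; rewrite eg0 eqxx.
  have sv' : gsrc (tau (gtgt g)) = y by rewrite sv.
  have evi : e (ginv (tau (gtgt g))) = e (gid y) by rewrite etaui rt.
  split; first by apply/rep_eq.
  split; [exact: (sl su tu tv) | exact: (tl tu sv' tv) |].
  move=> a Ha.
  have [t0 [Tt tw]] := L3 ry Ha.
  have ay : inS e (gid y) a by case: Ha.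
  apply/(lemC ci ideal_t iso aid comp su tu sv' tv (etau _) eui (etau _) evi ay).
  have := st t0 Tt.
  by rewrite mul_src (mul_tgt t0 g) !tw eqxx rt eqxx.
case=> /rep_eq rt [_ _ stl] t0 Tt.
rewrite -/y in rt.
have sv' : gsrc (tau (gtgt g)) = y by rewrite sv.
have evi : e (ginv (tau (gtgt g))) = e (gid y) by rewrite etaui -rt.
have Ha := L2 y Tt.
have ay : inS e (gid y) (t0 * e (gid y)) by case: Ha.
have := stl _ Ha.
move/(lemC ci ideal_t iso aid comp su tu sv' tv (etau _) eui (etau _) evi ay).
move=> h.
rewrite (mul_src t0 g) (mul_tgt t0 g) (L1 (gsrc g) Tt) (L1 (gtgt g) Tt) -rt.
exact: h.
Qed.

End Main.
Unset Implicit Arguments.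

Theorem lemma4p2 (G : groupoid) (S : pzRingType)
  (e : gmor G -> S) (alpha : gmor G -> S -> S)
  (H : {set gmor G}) (rep : gobj G -> gobj G) (tau : gobj G -> gmor G) :
  gconnected G ->
  dsum_objects e ->
  unital_partial_action e alpha ->
  group_type_on e [set: gmor G] ->
  (forall g, e g != 0) ->
  wSub e H ->
  (* rep z = y_j, the chosen object of the component Y_j containing z *)
  (forall z, hconn H z (rep z)) ->
  (forall z z', hconn H z z' -> rep z = rep z') ->
  (* tau z = tau_{j,z}, the chosen transversal of H_j for y_j *)
  (forall z, tau (rep z) = gid (rep z)) ->
  (forall z, [/\ tau z \in H, gsrc (tau z) = rep z & gtgt (tau z) = z]) ->
  (forall z, sameS e (ginv (tau z)) (gid (rep z)) /\ sameS e (tau z) (gid z)) ->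
  let T := fixring e alpha (fun _ => True) (fun k => k \in H) in
  let Ty := fun y => fixring e alpha (inS e (gid y))
                       (fun k => [/\ k \in H, gsrc k = y & gtgt k = y]) in
  forall g : gmor G,
    stabG e alpha T g <->
    (hconn H (gsrc g) (gtgt g) /\
     stabGy e alpha (rep (gsrc g)) (Ty (rep (gsrc g)))
       (gmul (gmul (ginv (tau (gtgt g))) g) (tau (gsrc g)))).
Proof.
move=> _ DS [ci [ideal_t [iso [aid comp]]]] _ ne0 [[Hsub _] _] Hrep1 Hrep2 _ Htau2 Htau3 T Ty g.
exact: (mainB ci ideal_t iso aid comp DS Hsub Hrep1 Hrep2 Htau2 Htau3 ne0 g).
Qed.
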